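(* For every $\alpha\in\mathbb R$, the equation $2x-1=\tanh(\alpha x^2)$ has a unique solution $x\in(0,1)$. *)

(* Defs.v *)
From Stdlib Require Import Reals.

(* Main.v *)
Require Import Defs.
From Stdlib Require Import Reals Lra.
From Coquelicot Require Import Coquelicot.
Open Scope R_scope.
Lemma ln_le_sub1 t : 0 < t -> ln t <= t - 1.
Proof.
  intros Ht. destruct (Rle_or_lt (ln t) (t-1)) as [H|H]; auto.
  exfalso. apply exp_increasing in H. rewrite exp_ln in H by lra.
  assert (1 + (t-1) <= exp (t-1)) by (apply exp_ineq1_le). lra.
Qed.
Lemma ln2_lt1 : ln 2 < 1.
Proof.
  rewrite <- (ln_exp 1). apply ln_increasing; [lra|].
  assert (H := exp_ineq1 1 ltac:(lra)). lra.
Qed.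
Lemma key t : 0 < t -> 2 * ln t < t.
Proof.
  intros Ht. replace t with (2 * (t/2)) at 1 by field.
  rewrite ln_mult by lra. pose proof (ln_le_sub1 (t/2)). pose proof ln2_lt1. lra.
Qed.
Lemma tanh_form u : tanh u = (exp (2*u) - 1) / (exp (2*u) + 1).
Proof.
  unfold tanh, sinh, cosh. rewrite exp_Ropp.
  replace (2*u) with (u+u) by ring. rewrite exp_plus.
  pose proof (exp_pos u). field. split; nra.
Qed.
Lemma sol_ln alpha x : 0 < x < 1 -> 2 * x - 1 = tanh (alpha * x ^ 2) ->
  ln x - ln (1 - x) = 2 * alpha * x ^ 2.
Proof.
  intros Hx H. rewrite tanh_form in H. set (E := exp (2 * (alpha * x^2))) in H.
  assert (HE : 0 < E) by apply exp_pos.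
  assert (E = x / (1 - x)).
  { assert (H1 : (2*x-1)*(E+1) = E-1) by (rewrite H; field; lra).
    apply (Rmult_eq_reg_r (1-x)); [|lra]. field_simplify; [|lra]. nra. }
  rewrite <- ln_div by lra. rewrite <- H0. unfold E. rewrite ln_exp. ring.
Qed.
Definition g (x : R) := (ln x - ln (1 - x)) / x ^ 2.
Definition g' (x : R) := (1 / (1 - x) - 2 * (ln x - ln (1 - x))) / x ^ 3.
Lemma g_deriv c : 0 < c < 1 -> derivable_pt_lim g c (g' c).
Proof.
  intros Hc. apply is_derive_Reals. unfold g, g'.
  auto_derive.
  - repeat split; try lra. apply Rmult_integral_contrapositive; split; nra.
  - unfold Rminus. field. lra.
Qed.
Lemma g'_pos c : 0 < c < 1 -> 0 < g' c.
Proof.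
  intros Hc. unfold g'. rewrite <- ln_div by lra.
  pose proof (key (c / (1-c)) ltac:(apply Rdiv_lt_0_compat; lra)).
  assert (c / (1-c) < 1/(1-c)). { unfold Rdiv. apply Rmult_lt_compat_r. apply Rinv_0_lt_compat; lra. lra. }
  apply Rdiv_lt_0_compat; [lra|]. apply pow_lt; lra.
Qed.
Lemma g_inc x y : 0 < x -> x < y -> y < 1 -> g x < g y.
Proof.
  intros. destruct (MVT_cor2 g g' x y) as [c [Hc1 Hc2]]; auto.
  - intros; apply g_deriv; lra.
  - pose proof (g'_pos c ltac:(lra)). nra.
Qed.

Theorem lemma33 (alpha : R) :
  exists! x : R, 0 < x < 1 /\ 2 * x - 1 = tanh (alpha * x ^ 2).
Proof.
  set (F := fun x => 2 * x - 1 - (exp (2 * (alpha * x ^ 2)) - 1) / (exp (2 * (alpha * x ^ 2)) + 1)).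
  assert (Fc : continuity F).
  { intro x. apply derivable_continuous_pt, ex_derive_Reals_0.
    unfold F. auto_derive. pose proof (exp_pos (2 * (alpha * (x * (x * 1))))). lra. }
  assert (F0 : F 0 < 0).
  { unfold F. replace (2 * (alpha * 0 ^ 2)) with 0 by ring. rewrite exp_0. lra. }
  assert (F1 : 0 < F 1).
  { unfold F. pose proof (exp_pos (2 * (alpha * 1 ^ 2))).
    assert ((exp (2 * (alpha * 1 ^ 2)) - 1) / (exp (2 * (alpha * 1 ^ 2)) + 1) < 1).
    { apply (Rmult_lt_reg_r (exp (2 * (alpha * 1 ^ 2)) + 1)); [lra|].
      unfold Rdiv. rewrite Rmult_assoc, Rinv_l by lra. lra. }
    lra. }
  destruct (IVT F 0 1 Fc ltac:(lra) F0 F1) as [z [Hz Fz]].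
  assert (Hz' : 0 < z < 1).
  { split; destruct Hz as [[Hz|Hz] [Hz2|Hz2]]; subst; try lra. }
  exists z. split.
  - split; auto. rewrite tanh_form. unfold F in Fz. lra.
  - intros y [Hy Ey].
    assert (Ez : 2 * z - 1 = tanh (alpha * z ^ 2)) by (rewrite tanh_form; unfold F in Fz; lra).
    apply sol_ln in Ey; auto. apply sol_ln in Ez; auto.
    assert (gy : g y = 2 * alpha) by (unfold g; rewrite Ey; field; lra).
    assert (gz : g z = 2 * alpha) by (unfold g; rewrite Ez; field; lra).
    destruct (Rtotal_order z y) as [H|[H|H]]; auto.
    + pose proof (g_inc z y ltac:(lra) H ltac:(lra)). lra.
    + pose proof (g_inc y z ltac:(lra) H ltac:(lra)). lra.
Qed.
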